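(* Let $\mathcal G$ be a finite groupoid and $\alpha=(S_g,\alpha_g)_{g\in\mathcal G}$ a unital partial action of $\mathcal G$ on a commutative ring $S$ with $S_g=S1_g$ ($1_g$ central idempotents) and $S=\bigoplus_{z\in\mathcal G_0}S_z$. Let $\mathcal G_0=Z_1\,\dot\cup\cdots\dot\cup\,Z_r$ be the partition of $\mathcal G_0$ into the object sets of the connected components $\mathcal G_1,\dots,\mathcal G_r$ of $\mathcal G$ (where $\mathcal G_j$ is the full subgroupoid on $Z_j$), let $S_j=\bigoplus_{y\in Z_j}S_y$, let $\alpha_j=(S_g,\alpha_g)_{g\in\mathcal G_j}$ be the restricted partial action of $\mathcal G_j$ on $S_j$, and put $R=S^{\alpha_{\mathcal G}}$ and $R_j=S_j^{\alpha_j}$. Then $R\subseteq S$ is an $\alpha$-partial Galois extension if and only if $R_j\subseteq S_j$ is an $\alpha_j$-partial Galois extension for every $1\le j\le r$.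
   Context: A groupoid is a small category in which every morphism is invertible; $\mathcal G_0$ is its set of objects, identified with identity morphisms; $s(g),t(g)$ are source and target, $\mathcal G(x,y)=\{g:s(g)=x,t(g)=y\}$, $gh$ is defined iff $s(g)=t(h)$. Connected components are the full subgroupoids on the equivalence classes of $x\sim y\iff\mathcal G(x,y)\ne\emptyset$. A partial action $\alpha=(S_g,\alpha_g)_{g\in\mathcal G}$ of $\mathcal G$ on a ring $S$: for each $g$, $S_{t(g)}$ is an ideal of $S$, $S_g$ an ideal of $S_{t(g)}$, $\alpha_g:S_{g^{-1}}\to S_g$ a ring isomorphism; $\alpha_x=\mathrm{id}_{S_x}$ for $x\in\mathcal G_0$; for composable $(g,h)$, $\alpha_h^{-1}(S_{g^{-1}}\cap S_h)\subseteq S_{(gh)^{-1}}$ and $\alpha_g\alpha_h(a)=\alpha_{gh}(a)$ on that set. Unital means $S_g=S1_g$ with $1_g$ a central idempotent. For a partial action $\beta=(A_g,\beta_g)_{g\in\mathcal K}$ of a groupoid $\mathcal K$ on a ring $A$, the invariant subring is $A^{\beta}=\{a\in A:\beta_g(a1_{g^{-1}})=a1_g\ \forall g\in\mathcal K\}$. An extension $B\subseteq A$ is a $\beta$-partial Galois extension if $B=A^{\beta}$ and there exist $m\ge1$ and $a_i,b_i\in A$ ($1\le i\le m$) with $\sum_{i=1}^m a_i\beta_g(b_i1_{g^{-1}})=\delta_{z,g}1_z$ for all $z\in\mathcal K_0$, $g\in\mathcal K$, i.e. the sum equals $1_g$ when $g\in\mathcal K_0$ and $0$ when $g\notin\mathcal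 K_0$. *)

(* Defs.v *)
From HB Require Import structures.
From mathcomp Require Import all_boot all_order all_algebra.
Set Implicit Arguments. Unset Strict Implicit. Unset Printing Implicit Defensive.
Import GRing.Theory.
Local Open Scope ring_scope.

(* A finite groupoid: objects O, morphisms G (both finite).
   comp g h is the composite "g h" (first h, then g); it is meaningful
   only when src g = tgt h (it is a total function, unspecified otherwise). *)
Record groupoid (O G : finType) := Groupoid {
  src : G -> O;
  tgt : G -> O;
  idm : O -> G;
  comp : G -> G -> G;
  ginv : G -> G;
  src_idm : forall x, src (idm x) = x;
  tgt_idm : forall x, tgt (idm x) = x;
  src_comp : forall g h, src g = tgt h -> src (comp g h) = src h;
  tgt_comp : forall g h, src g = tgt h -> tgt (comp g h) = tgt g;
  compA : forall g h k, src g = tgt h -> src h = tgt k ->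
            comp g (comp h k) = comp (comp g h) k;
  comp_idm_r : forall g, comp g (idm (src g)) = g;
  comp_idm_l : forall g, comp (idm (tgt g)) g = g;
  src_ginv : forall g, src (ginv g) = tgt g;
  tgt_ginv : forall g, tgt (ginv g) = src g;
  comp_ginv_r : forall g, comp g (ginv g) = idm (tgt g);
  comp_ginv_l : forall g, comp (ginv g) g = idm (src g)
}.

Definition is_obj (O G : finType) (Gp : groupoid O G) (g : G) : bool :=
  [exists x : O, g == idm Gp x].

Definition in_ideal (S : comPzRingType) (u a : S) : Prop := exists c : S, a = c * u.

(* A unital partial action of Gp on the commutative ring S:
   S_g = S (one g), with one g an idempotent (central, S being commutative),
   and act g : S_{g^-1} -> S_g a ring isomorphism. *)
Record unital_partial_action (O G : finType) (Gp : groupoid O G)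
    (S : comPzRingType) := UPA {
  one : G -> S;
  act : G -> S -> S;
  one_idem : forall g, one g * one g = one g;
  one_sub_tgt : forall g, in_ideal (one (idm Gp (tgt Gp g))) (one g);
  act_into : forall g a, in_ideal (one (ginv Gp g)) a -> in_ideal (one g) (act g a);
  act_add : forall g a b, in_ideal (one (ginv Gp g)) a -> in_ideal (one (ginv Gp g)) b ->
      act g (a + b) = act g a + act g b;
  act_mul : forall g a b, in_ideal (one (ginv Gp g)) a -> in_ideal (one (ginv Gp g)) b ->
      act g (a * b) = act g a * act g b;
  act_inj : forall g a b, in_ideal (one (ginv Gp g)) a -> in_ideal (one (ginv Gp g)) b ->
      act g a = act g b -> a = b;
  act_surj : forall g b, in_ideal (one g) b ->
      exists2 a, in_ideal (one (ginv Gp g)) a & act g a = b;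
  act_idm : forall x a, in_ideal (one (idm Gp x)) a -> act (idm Gp x) a = a;
  act_comp : forall g h, src Gp g = tgt Gp h -> forall a,
      in_ideal (one (ginv Gp h)) a ->
      in_ideal (one (ginv Gp g)) (act h a) -> in_ideal (one h) (act h a) ->
      in_ideal (one (ginv Gp (comp Gp g h))) a /\
      act g (act h a) = act (comp Gp g h) a
}.

Definition direct_sum_objects (O G : finType) (Gp : groupoid O G)
    (S : comPzRingType) (al : unital_partial_action Gp S) : Prop :=
  (forall a : S, exists c : O -> S,
      (forall z, in_ideal (one al (idm Gp z)) (c z)) /\ a = \sum_(z : O) c z) /\
  (forall c : O -> S, (forall z, in_ideal (one al (idm Gp z)) (c z)) ->
      \sum_(z : O) c z = 0 -> forall z, c z = 0).

Definition invariants (O G : finType) (Gp : groupoid O G)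
    (S : comPzRingType) (al : unital_partial_action Gp S)
    (A : S -> Prop) (K : pred G) : S -> Prop :=
  fun a => A a /\ forall g, K g ->
     act al g (a * one al (ginv Gp g)) = a * one al g.

(* B ⊆ A is a partial Galois extension for the restriction of al to K
   (objects of K identified with the identities lying in K). *)
Definition partial_Galois (O G : finType) (Gp : groupoid O G)
    (S : comPzRingType) (al : unital_partial_action Gp S)
    (B A : S -> Prop) (K : pred G) : Prop :=
  (forall b, B b <-> invariants al A K b) /\
  exists (m : nat) (a b : 'I_m -> S), (0 < m)%N /\
    (forall i, A (a i) /\ A (b i)) /\
    forall g, K g ->
      \sum_(i < m) a i * act al g (b i * one al (ginv Gp g))
        = (if is_obj Gp g then one al g else 0).

Definition component (O G : finType) (Gp : groupoid O G) (x : O) : pred O :=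
  fun y => [exists g : G, (src Gp g == x) && (tgt Gp g == y)].

Definition full_sub (O G : finType) (Gp : groupoid O G) (Z : pred O) : pred G :=
  fun g => Z (src Gp g) && Z (tgt Gp g).

Definition sum_ideals (O G : finType) (Gp : groupoid O G)
    (S : comPzRingType) (al : unital_partial_action Gp S) (Z : pred O) : S -> Prop :=
  fun a => exists c : O -> S,
    (forall y, Z y -> in_ideal (one al (idm Gp y)) (c y)) /\
    a = \sum_(y : O | Z y) c y.

(* Main.v *)
Require Import Defs.
From mathcomp Require Import all_boot all_order all_algebra.
Set Implicit Arguments. Unset Strict Implicit. Unset Printing Implicit Defensive.
Import GRing.Theory.
Local Open Scope ring_scope.

Section Aux.
Variables (O G : finType) (Gp : groupoid O G) (S : comPzRingType)
  (al : unital_partial_action Gp S).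

Local Notation o x := (Defs.one al (idm Gp x)).

Definition galseq (A : S -> Prop) (K : pred G) : Prop :=
  exists ps : seq (S * S), (forall p, p \in ps -> A p.1 /\ A p.2) /\
   forall g, K g -> \sum_(p <- ps) p.1 * Defs.act al g (p.2 * Defs.one al (ginv Gp g))
     = (if is_obj Gp g then Defs.one al g else 0).

Lemma galseqP A (K : pred G) : A 0 -> (exists (m : nat) (a b : 'I_m -> S), (0 < m)%N /\
    (forall i, A (a i) /\ A (b i)) /\
    forall g, K g ->
      \sum_(i < m) a i * Defs.act al g (b i * Defs.one al (ginv Gp g))
        = (if is_obj Gp g then Defs.one al g else 0)) <-> galseq A K.
Proof.
move=> A0; split.
- case=> m [a [b [_ [Hab Hs]]]].
  exists [seq (a i, b i) | i <- enum 'I_m]; split.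
  + by move=> p /mapP [i _ ->] /=; exact: Hab.
  + by move=> g Kg; rewrite big_map big_enum /=; exact: Hs.
- case=> ps [Hps Hs].
  pose ps' := (0 : S, 0 : S) :: ps.
  exists (size ps'), (fun i => (nth (0,0) ps' i).1), (fun i => (nth (0,0) ps' i).2).
  split => //; split.
  + move=> i; have: nth (0,0) ps' i \in ps' by rewrite mem_nth.
    rewrite in_cons => /orP [/eqP -> //|]; exact: Hps.
  + move=> g Kg; rewrite -(Hs g Kg).
    have -> : \sum_(p <- ps) p.1 * Defs.act al g (p.2 * Defs.one al (ginv Gp g))
       = \sum_(p <- ps') p.1 * Defs.act al g (p.2 * Defs.one al (ginv Gp g)).
      by rewrite big_cons /= mul0r add0r.
    by rewrite (big_nth (0,0)) big_mkord.
Qed.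

Lemma ideal_trans (u v a : S) : in_ideal u v -> in_ideal v a -> in_ideal u a.
Proof. by case=> c -> [d ->]; exists (d * c); rewrite mulrA. Qed.

Lemma ideal_tgt g a : in_ideal (Defs.one al g) a -> in_ideal (o (tgt Gp g)) a.
Proof. exact/ideal_trans/one_sub_tgt. Qed.

Hypothesis DS : direct_sum_objects al.

Lemma orth x y : x != y -> o x * o y = 0.
Proof.
move=> nxy; set p := o x * o y.
pose c := fun z => if z == x then p else if z == y then - p else 0.
have Hc : forall z, in_ideal (o z) (c z).
  move=> z; rewrite /c; case: eqP => [->|_].
    by exists (o y); rewrite /p mulrC.
  case: eqP => [->|_]; first by exists (- o x); rewrite /p mulNr.
  by exists 0; rewrite mul0r.
have := (proj2 DS) c Hc.
have -> : \sum_z c z = 0.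
  rewrite (bigD1 x) //= {1}/c eqxx (bigD1 y) /=; last by rewrite eq_sym.
  rewrite {1 2}/c eqxx eq_sym (negbTE nxy) big1 ?addr0 ?subrr //.
  by move=> z /andP [/negbTE -> /negbTE ->].
by move=> /(_ erefl x); rewrite /c eqxx.
Qed.


Definition eZ (Z : pred O) : S := \sum_(y | Z y) o y.

Lemma idem_e (Z : pred O) x : Z x -> o x * eZ Z = o x.
Proof.
move=> Zx; rewrite /eZ mulr_sumr (bigD1 x) //= one_idem big1 ?addr0 //.
by move=> y /andP [_ nyx]; rewrite orth // eq_sym.
Qed.

Lemma absorb (Z : pred O) g u : in_ideal (Defs.one al g) u -> Z (tgt Gp g) ->
  u * eZ Z = u.
Proof. by move=> /ideal_tgt [c ->] Zt; rewrite -mulrA idem_e. Qed.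

Lemma vanish (Z : pred O) g a u : sum_ideals al Z a ->
  in_ideal (Defs.one al g) u -> ~~ Z (tgt Gp g) -> a * u = 0.
Proof.
move=> [c [Hc ->]] /ideal_tgt [d ->] nZ; rewrite mulr_suml big1 // => y Zy.
have [k ->] := Hc y Zy.
rewrite mulrCA -mulrA orth ?mulr0 //.
by apply/eqP => eyt; move: nZ; rewrite -eyt Zy.
Qed.

Lemma sum_ideals_e (Z : pred O) a : sum_ideals al Z (a * eZ Z).
Proof.
exists (fun y => a * o y); split; first by move=> y _; exists a.
by rewrite /eZ mulr_sumr.
Qed.

End Aux.

Section Comp.
Variables (O G : finType) (Gp : groupoid O G).

Lemma comp_refl x : component Gp x x.
Proof. by apply/existsP; exists (idm Gp x); rewrite src_idm tgt_idm !eqxx. Qed.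

Lemma comp_sym x y : component Gp x y -> component Gp y x.
Proof.
move=> /existsP [g /andP [/eqP sg /eqP tg]]; apply/existsP; exists (ginv Gp g).
by rewrite src_ginv tgt_ginv sg tg !eqxx.
Qed.

Lemma comp_trans x y z : component Gp x y -> component Gp y z -> component Gp x z.
Proof.
move=> /existsP [g /andP [/eqP sg /eqP tg]] /existsP [h /andP [/eqP sh /eqP th]].
apply/existsP; exists (Defs.comp Gp h g).
by rewrite src_comp ?tgt_comp ?sh ?tg // sg th !eqxx.
Qed.

Lemma comp_eq x y : component Gp x y -> component Gp x =1 component Gp y.
Proof.
move=> cxy z; apply/idP/idP => H.
  exact: comp_trans (comp_sym cxy) H.
exact: comp_trans cxy H.
Qed.

Definition rep x := odflt x [pick y | component Gp x y].

Lemma rep_eq x y : component Gp x y -> rep x = rep y.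
Proof.
move=> cxy; rewrite /rep (eq_pick (comp_eq cxy)).
case: pickP => //= H; have := H x; have := H y.
by rewrite comp_refl.
Qed.

Lemma rep_in x : component Gp x (rep x).
Proof. rewrite /rep; case: pickP => //= H; exact: comp_refl. Qed.

Lemma rep_rep x : rep (rep x) = rep x.
Proof. by rewrite -(rep_eq (rep_in x)). Qed.

End Comp.

Theorem proposition2p11 (O G : finType) (Gp : groupoid O G) (S : comPzRingType)
    (al : unital_partial_action Gp S) :
  direct_sum_objects al ->
  partial_Galois al (invariants al (fun _ => True) predT) (fun _ => True) predT <->
  (forall x : O,
     partial_Galois al
       (invariants al (sum_ideals al (component Gp x)) (full_sub Gp (component Gp x)))
       (sum_ideals al (component Gp x)) (full_sub Gp (component Gp x))).
Proof.
move=> DS.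
have T0 : (fun _ : S => True) 0 by [].
have Z0 : forall x, sum_ideals al (component Gp x) 0.
  move=> x; exists (fun _ => 0); split; last by rewrite big1.
  by move=> y _; exists 0; rewrite mul0r.
have inS : forall g, in_ideal (Defs.one al g) (if is_obj Gp g then Defs.one al g else 0).
  by move=> g; case: ifP => _; [exists 1; rewrite mul1r | exists 0; rewrite mul0r].
rewrite /partial_Galois; split.
- move=> [_ /(@galseqP _ _ Gp S al (fun _ => True) predT T0) [ps [_ Hs]]] x; split; first by [].
  apply/(@galseqP _ _ Gp S al _ (full_sub Gp (component Gp x)) (Z0 x)).
  set e := eZ al (component Gp x).
  exists [seq (p.1 * e, p.2 * e) | p <- ps]; split.
    by move=> q /mapP [p _ ->]; split; apply: sum_ideals_e.
  move=> g /andP [Cs Ct]; rewrite big_map.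
  rewrite -[RHS](absorb DS (Z := component Gp x) (inS g)) //.
  rewrite -(Hs g erefl) mulr_suml; apply: eq_bigr => p _ /=.
  have -> : p.2 * e * Defs.one al (ginv Gp g) = p.2 * Defs.one al (ginv Gp g).
    rewrite -mulrA [e * _]mulrC (absorb DS (Z := component Gp x) (g := ginv Gp g)) //.
      by exists 1; rewrite mul1r.
    by rewrite tgt_ginv.
  by rewrite mulrAC.
- move=> H; split; first by [].
  have H' : forall x, galseq al (sum_ideals al (component Gp x)) (full_sub Gp (component Gp x)).
    by move=> x; apply/(@galseqP _ _ Gp S al _ (full_sub Gp (component Gp x)) (Z0 x)); exact: (proj2 (H x)).
  move: H'; rewrite /galseq => /fin_all_exists [ps Hps].
  apply/(@galseqP _ _ Gp S al (fun _ => True) predT T0).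
  exists (flatten [seq ps x | x <- index_enum O & rep Gp x == x]); split => //.
  move=> g _; rewrite big_flatten big_map big_filter.
  set x0 := rep Gp (tgt Gp g).
  have Ct : component Gp x0 (tgt Gp g) by apply: comp_sym; apply: rep_in.
  have Cs : component Gp x0 (src Gp g).
    apply: comp_trans Ct _; apply: comp_sym; apply/existsP; exists g; rewrite !eqxx.
    done.
  rewrite (bigD1 x0) /=; last by rewrite rep_rep.
  rewrite (proj2 (Hps x0)) /full_sub ?Cs ?Ct // big1 ?addr0 //.
  move=> x /andP [/eqP rx nx]; apply: big1_seq => p /andP [_ Hp].
  apply: (vanish DS (Z := component Gp x) (g := g)).
  - exact: (proj1 (proj1 (Hps x) p Hp)).
  - by apply: act_into; exists p.2.
  - apply/negP => Cx; move/negP: nx; apply; apply/eqP.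
    by rewrite -rx /x0 (rep_eq Cx).
Qed.
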